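(* Let $b\ge1$, $1\le a\le b$, $t\ge0$ be integers and $d=2t+1$. Let $\nu^{\text{off-diag}}$ be the number of pairs $(k,q)$ with $k$ odd, $1\le k<d$, $-k\le q\le k$, $q\equiv 2a-1\pmod{2b}$. Then $\nu^{\text{off-diag}}=\tfrac{t^2}{b}+\tfrac{t}{b}+\tfrac{2a(a-b-1)+b+1}{2b}+c$, where $c=\tfrac{1}{2b}[t+1-a]_b^2+\tfrac{1}{2b}[t+1-a]_b\big(b-2-2[t-a]_b\big)+\tfrac{1}{2b}[t+a]_b\big(b-2-2[a+t-1]_b+[a+t]_b\big)$, and $0\le c\le 2b$.
   Context: For an integer $x$ and positive integer $y$, $[x]_y:=x\bmod y\in\{0,\dots,y-1\}$. *)

(* Defs.v *)
From mathcomp Require Import all_boot all_order all_algebra.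
Set Implicit Arguments. Unset Strict Implicit. Unset Printing Implicit Defensive.
Import Order.TTheory GRing.Theory Num.Theory.
Local Open Scope ring_scope.

Definition brmod (x : int) (y : nat) : rat := ((x %% y%:Z)%Z)%:~R.

(* nu^{off-diag}: number of pairs (k,q), k odd, 1 <= k < d = 2t+1,
   q an integer with -k <= q <= k and q = 2a-1 (mod 2b).
   k ranges over 'I_(2t+1) restricted to odd k (so k >= 1 automatically);
   q is written q = i - k with i < 2k+1. *)
Definition nu_offdiag (a b t : nat) : nat :=
  \sum_(k < (2 * t + 1)%N | odd k)
     \sum_(i < (2 * k + 1)%N)
        ((i%:Z - k%:Z) == (2 * a%:Z - 1) %[mod (2 * b)%:Z])%Z.

Definition c_term (a b t : nat) : rat :=
  let B : rat := b%:R in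
  let ti : int := t%:Z in let ai : int := a%:Z in
  (brmod (ti + 1 - ai) b) ^+ 2 / (2 * B)
  + brmod (ti + 1 - ai) b * (B - 2 - 2 * brmod (ti - ai) b) / (2 * B)
  + brmod (ti + ai) b * (B - 2 - 2 * brmod (ai + ti - 1) b + brmod (ai + ti) b) / (2 * B).

(* Main.v *)
Require Import Defs.
From mathcomp Require Import all_boot all_order all_algebra zify ring lra.
Import Order.TTheory GRing.Theory Num.Theory.
Local Open Scope ring_scope.

Lemma mod_step (x : int) (b : nat) : (1 <= b)%N ->
  ((x + 1) %% b%:Z)%Z = (x %% b%:Z)%Z + 1 \/
  (((x + 1) %% b%:Z)%Z = 0 /\ (x %% b%:Z)%Z = b%:Z - 1).
Proof.
move=> hb.
have bn0 : b%:Z != 0 by lia.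
have h0 := modz_ge0 x bn0.
have h1 : (x %% b%:Z)%Z < b%:Z by apply: ltz_pmod; lia.
have -> : ((x + 1) %% b%:Z)%Z = (((x %% b%:Z)%Z + 1) %% b%:Z)%Z by rewrite modzDml.
have [hl|hl] := boolP ((x %% b%:Z)%Z + 1 < b%:Z).
  left; rewrite modz_small //; apply/andP; split => //; lia.
right; have -> : (x %% b%:Z)%Z + 1 = 1 * b%:Z + 0 by lia.
rewrite modzMDl modz_small /=; last by lia.
split=> //; lia.
Qed.

Lemma brmod_step (x : int) (b : nat) : (1 <= b)%N ->
  brmod (x + 1) b = brmod x b + 1 \/
  (brmod (x + 1) b = 0 /\ brmod x b = b%:R - 1).
Proof.
move=> hb; rewrite /brmod.
case: (mod_step x b hb) => [->|[-> ->]]; [left|right]; rewrite ?intrD //.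

Qed.

Lemma brmod_bnd (x : int) (b : nat) : (1 <= b)%N ->
  0 <= brmod x b /\ brmod x b <= b%:R - 1.
Proof.
move=> hb; rewrite /brmod.
have bn0 : b%:Z != 0 by lia.
have h0 := modz_ge0 x bn0.
have h1 : (x %% b%:Z)%Z < b%:Z by apply: ltz_pmod; lia.
split; first by rewrite ler0z.
have -> : (b%:R - 1 : rat) = ((b%:Z - 1)%:~R) by rewrite intrB.
rewrite ler_int; lia.
Qed.

Definition cs (a b t : nat) : rat :=
  let P := brmod (t%:Z + 1 - a%:Z) b in let R := brmod (t%:Z + a%:Z) b in
  (P * (b%:R - P) + R * (b%:R - R)) / (2 * b%:R).

Lemma c_simp a b t : (1 <= b)%N -> c_term a b t = cs a b t.
Proof.
move=> hb; rewrite /c_term /cs /=.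
have bn0 : (b%:R : rat) != 0 by rewrite pnatr_eq0 -lt0n.
have -> : t%:Z + 1 - a%:Z = (t%:Z - a%:Z) + 1 by ring.
set y := a%:Z + t%:Z - 1.
have -> : a%:Z + t%:Z = y + 1 by rewrite /y; ring.
have -> : t%:Z + a%:Z = y + 1 by rewrite /y; ring.
case: (brmod_step (t%:Z - a%:Z) b hb) => [->|[-> ->]];
case: (brmod_step y b hb) => [->|[-> ->]]; field; exact: bn0.
Qed.

Definition ind (a b : nat) (z : int) : nat :=
  (z == (2 * a%:Z - 1) %[mod (2 * b)%:Z])%Z.

Lemma ind_odd a b (w : int) : (1 <= b)%N ->
  ind a b (2 * w + 1) = ((w + 1 - a%:Z) %% b%:Z == 0)%Z.
Proof.
move=> hb; rewrite /ind eqz_mod_dvd; congr nat_of_bool.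
apply/idP/idP.
  move/dvdzP=> [q hq]; apply/eqP/dvdz_mod0P/dvdzP; exists q; lia.
move/eqP/dvdz_mod0P/dvdzP=> [q hq]; apply/dvdzP; exists q; lia.
Qed.

Lemma ind_nodd a b (w : int) : (1 <= b)%N ->
  ind a b (- (2 * w + 1)) = ((w + a%:Z) %% b%:Z == 0)%Z.
Proof.
move=> hb; rewrite /ind eqz_mod_dvd; congr nat_of_bool.
apply/idP/idP.
  move/dvdzP=> [q hq]; apply/eqP/dvdz_mod0P/dvdzP; exists (-q); lia.
move/eqP/dvdz_mod0P/dvdzP=> [q hq]; apply/dvdzP; exists (-q); lia.
Qed.

Lemma ind_even a b (w : int) : (1 <= b)%N -> ind a b (2 * w) = 0%N.
Proof.
move=> hb; rewrite /ind eqz_mod_dvd.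
case: dvdzP => // [[q hq]]; lia.
Qed.

Definition T (a b k : nat) : nat :=
  (\sum_(0 <= i < (2 * k + 1)) ind a b (i%:Z - k%:Z))%N.

Lemma T_step a b k : T a b k.+2 =
  (ind a b (- (k%:Z + 2)) + ind a b (- (k%:Z + 1)) + T a b k
  + ind a b (k%:Z + 1) + ind a b (k%:Z + 2))%N.
Proof.
rewrite /T.
have -> : (2 * k.+2 + 1 = (2 * k + 1).+4)%N by lia.
rewrite big_nat_recl // big_nat_recl // big_nat_recr /= ?big_nat_recr /=; try lia.
have E : forall i : nat, ind a b (i.+2%:Z - k.+2%:Z) = ind a b (i%:Z - k%:Z).
  by move=> i; congr ind; lia.
rewrite (eq_bigr _ (fun i _ => E i)).
have -> : (0%:Z - k.+2%:Z) = - (k%:Z + 2) by lia.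
have -> : (1%:Z - k.+2%:Z) = - (k%:Z + 1) by lia.
have -> : ((2 * k + 1).+2%:Z - k.+2%:Z) = k%:Z + 1 by lia.
have -> : ((2 * k + 1).+3%:Z - k.+2%:Z) = k%:Z + 2 by lia.
lia.
Qed.

Lemma modz_eq (x q r : int) (b : nat) : 0 <= r < b%:Z -> x = q * b%:Z + r ->
  (x %% b%:Z)%Z = r.
Proof. by move=> hr ->; rewrite modzMDl modz_small. Qed.

Lemma brmod_a a b : (1 <= a)%N -> (a <= b)%N ->
  brmod a%:Z b = if a == b then 0 else a%:R.
Proof.
move=> ha hab; rewrite /brmod; case: eqP => [->|hne].
  by rewrite (@modz_eq _ 1 0) //; lia.
by rewrite (@modz_eq _ 0 a) //; lia.
Qed.

Lemma brmod_1a a b : (1 <= a)%N -> (a <= b)%N ->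
  brmod (1 - a%:Z) b = if a == 1%N then 0 else b%:R + 1 - a%:R.
Proof.
move=> ha hab; rewrite /brmod; case: eqP => [->|hne].
  by rewrite (@modz_eq _ 0 0) //; lia.
rewrite (@modz_eq _ (-1) (b%:Z + 1 - a%:Z)); try lia.
by rewrite intrB intrD.
Qed.

Lemma brmod_na a b : (1 <= a)%N -> (a <= b)%N ->
  brmod (- a%:Z) b = b%:R - a%:R.
Proof.
move=> ha hab; rewrite /brmod.
rewrite (@modz_eq _ (-1) (b%:Z - a%:Z)); try lia.
by rewrite intrB.
Qed.

Lemma zero_ind (x : int) (b : nat) : (1 <= b)%N ->
  (((x + 1) %% b%:Z == 0)%Z : nat)%:R * b%:R = 1 + brmod x b - brmod (x + 1) b :> rat.
Proof.
move=> hb.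
have E : ((x + 1) %% b%:Z == 0)%Z = (brmod (x + 1) b == 0).
  by rewrite /brmod intr_eq0.
rewrite E; case: (brmod_step x b hb) => [->|[-> ->]].
  have [h0 _] := brmod_bnd x b hb.
  have -> : (brmod x b + 1 == 0) = false by apply/negbTE; rewrite gt_eqF // ltr_wpDl.
  by rewrite mul0r; ring.
by rewrite eqxx mul1r; ring.
Qed.

Lemma S_formula a b t : (1 <= b)%N -> (1 <= a)%N -> (a <= b)%N ->
  (T a b (2 * t + 1))%:R * b%:R =
  2 * t%:R + 1 + b%:R - brmod (t%:Z + 1 - a%:Z) b - brmod (t%:Z + a%:Z) b :> rat.
Proof.
move=> hb ha hab; elim: t => [|t IH].
  rewrite /T /= !big_nat_recl // big_geq //.
  have -> : (0%N%:Z - 1%N%:Z) = - (2 * 0 + 1) by [].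
  have -> : (1%N%:Z - 1%N%:Z) = 2 * 0 by [].
  have -> : (2%N%:Z - 1%N%:Z) = 2 * 0 + 1 by [].
  rewrite ind_odd // ind_nodd // ind_even // !add0r.
  have -> : (1 - a%:Z) = (- a%:Z) + 1 by ring.
  rewrite add0n addn0 natrD mulrDl zero_ind // brmod_na //.
  have -> : (a%:Z %% b%:Z == 0)%Z = (brmod a%:Z b == 0) by rewrite /brmod intr_eq0.
  rewrite brmod_a //; case: (a =P b) => [E|hne].
    by subst a; rewrite eqxx /= mul1r; ring.
  have -> : (a%:R == 0 :> rat) = false by rewrite pnatr_eq0; lia.
  rewrite /=; ring.
have -> : (2 * t.+1 + 1 = (2 * t + 1).+2)%N by lia.
rewrite T_step.
set k := (2 * t + 1)%N.
have -> : - (k%:Z + 2) = - (2 * (t%:Z + 1) + 1) by rewrite /k; lia.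
have -> : - (k%:Z + 1) = 2 * (- (t%:Z + 1)) by rewrite /k; lia.
have -> : (k%:Z + 1) = 2 * (t%:Z + 1) by rewrite /k; lia.
have -> : (k%:Z + 2) = 2 * (t%:Z + 1) + 1 by rewrite /k; lia.
rewrite ind_odd // ind_nodd // !ind_even // !addn0 !natrD !mulrDl IH.
have -> : t%:Z + 1 + a%:Z = (t%:Z + a%:Z) + 1 by ring.
have -> : t%:Z + 1 + 1 - a%:Z = (t%:Z + 1 - a%:Z) + 1 by ring.
rewrite !zero_ind //.
have -> : t.+1%:Z = t%:Z + 1 by lia.
have -> : t%:Z + 1 + 1 - a%:Z = (t%:Z + 1 - a%:Z) + 1 by ring.
have -> : t%:Z + 1 + a%:Z = (t%:Z + a%:Z) + 1 by ring.
rewrite -natr1; ring.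
Qed.

Lemma nu_T a b t :
  nu_offdiag a b t = (\sum_(0 <= k < (2 * t + 1) | odd k) T a b k)%N.
Proof.
rewrite /nu_offdiag big_mkord; apply: eq_bigr => k _.
by rewrite /T big_mkord.
Qed.

Lemma nu_step a b t :
  nu_offdiag a b t.+1 = (nu_offdiag a b t + T a b (2 * t + 1))%N.
Proof.
rewrite !nu_T.
have -> : (2 * t.+1 + 1 = (2 * t + 1).+2)%N by lia.
rewrite big_mkcond /= big_nat_recr // big_nat_recr //= -big_mkcond /=.
have -> : odd (2 * t + 1) = true by rewrite oddD oddM.
by rewrite /= addn0.
Qed.

Lemma nu_formula a b t : (1 <= b)%N -> (1 <= a)%N -> (a <= b)%N ->
  ((nu_offdiag a b t)%:R : rat) =
      (t ^ 2)%:R / b%:R + t%:R / b%:R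
      + (2 * a%:R * (a%:R - b%:R - 1) + b%:R + 1) / (2 * b%:R)
      + cs a b t.
Proof.
move=> hb ha hab.
have bn0 : (b%:R : rat) != 0 by rewrite pnatr_eq0 -lt0n.
elim: t => [|t IH].
  rewrite nu_T big_mkcond big_nat1 /= /cs !add0r brmod_1a // brmod_a //.
  case: (a =P b) => [E|hne]; case: (a =P 1%N) => [E1|hne1].
  - by subst; field.
  - by subst; field.
  - subst; rewrite ?(introF eqP hne) /=; field; exact: bn0.
  - field; exact: bn0.
rewrite nu_step natrD IH.
have -> : ((T a b (2 * t + 1))%:R : rat) = (T a b (2 * t + 1))%:R * b%:R / b%:R.
  by rewrite mulfK.
rewrite S_formula // /cs.
have -> : t.+1%:Z + 1 - a%:Z = (t%:Z + 1 - a%:Z) + 1 by lia.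
have -> : t.+1%:Z + a%:Z = (t%:Z + a%:Z) + 1 by lia.
rewrite -natr1 natrX.
case: (brmod_step (t%:Z + 1 - a%:Z) b hb) => [->|[-> ->]];
case: (brmod_step (t%:Z + a%:Z) b hb) => [->|[-> ->]]; field; exact: bn0.
Qed.

Theorem lemmaS12 (a b t : nat) :
  (1 <= b)%N -> (1 <= a)%N -> (a <= b)%N ->
  ((nu_offdiag a b t)%:R : rat) =
      (t ^ 2)%:R / b%:R + t%:R / b%:R
      + (2 * a%:R * (a%:R - b%:R - 1) + b%:R + 1) / (2 * b%:R)
      + c_term a b t
  /\ 0 <= c_term a b t <= 2 * b%:R.
Proof.
move=> hb ha hab; rewrite c_simp //; split; first exact: nu_formula.
rewrite /cs.
have b0 : (0 : rat) < b%:R by rewrite ltr0n.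
have [h1 h2] := brmod_bnd (t%:Z + 1 - a%:Z) b hb.
have [h3 h4] := brmod_bnd (t%:Z + a%:Z) b hb.
set P := brmod _ b in h1 h2 *; set R := brmod _ b in h3 h4 *.
have b2 : (0 : rat) < 2 * b%:R by rewrite mulr_gt0.
apply/andP; split.
  apply: divr_ge0; last exact: ltW.
  nra.
rewrite ler_pdivrMr //; nra.
Qed.
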